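(* Let $X$ be an infinite compact metric space and $T:X\to X$ a continuous map. Let $K(X)$ be the hyperspace of all non-empty closed subsets of $X$ with the Hausdorff metric, and let $T_K:K(X)\to K(X)$ be the induced map $T_K(C)=TC$. Then the following are equivalent: (1) $(K(X),T_K)$ is Devaney chaotic; (2) $(K(X),T_K)$ is an HY-system; (3) $(X,T)$ is an HY-system.
   Context: For a compact metric space $(X,d)$, the Hausdorff metric on $K(X)$ is $d_H(A,B)=\max\{\max_{x\in A}\min_{y\in B}d(x,y),\ \max_{y\in B}\min_{x\in A}d(x,y)\}$; with it $K(X)$ is a compact metric space and $T_K$ is continuous. A dynamical system $(Y,S)$ is a compact metric space $Y$ with a continuous self-map $S$. $(Y,S)$ is transitive if for any two non-empty open sets $U,V\subset Y$ there is $n\in\mathbb{N}=\{1,2,\dots\}$ with $S^nU\cap V\neq\emptyset$; totally transitive if $(Y,S^n)$ is transitive for every $n\in\mathbb{N}$. A point $y$ is periodic if $S^ny=y$ for some $n\in\mathbb{N}$. $(Y,S)$ is Devaney chaotic if it is transitive and its set of periodic points is dense in $Y$ (for infinite $Y$ sensitive dependence on initial conditions follows automatically, so this agrees with the usual definition). $(Y,S)$ has dense small periodic sets if for every non-empty open $U\subset Y$ there exist a non-empty closed set $Z\subset U$ and $k\in\mathbb{N}$ with $S^kZ\subset Z$. $(Y,S)$ is an HY-system if it is totally transitive and has dense small periodic sets. *)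

(* Defs.v *)
From Stdlib Require Import Reals List.
Open Scope R_scope.

Definition is_metric {X : Type} (d : X -> X -> R) : Prop :=
  (forall x y, 0 <= d x y) /\
  (forall x y, d x y = 0 <-> x = y) /\
  (forall x y, d x y = d y x) /\
  (forall x y z, d x z <= d x y + d y z).

(** Compactness of a metric space (sequential compactness, equivalent for
    metric spaces). *)
Definition compact_metric {X : Type} (d : X -> X -> R) : Prop :=
  forall u : nat -> X, exists (phi : nat -> nat) (l : X),
    (forall n, (phi n < phi (S n))%nat) /\
    (forall eps, eps > 0 -> exists N, forall n, (n >= N)%nat -> d (u (phi n)) l < eps).

Definition infinite_type (X : Type) : Prop :=
  forall l : list X, exists x, ~ In x l.

Definition continuous_map {X : Type} (d : X -> X -> R) (T : X -> X) : Prop :=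
  forall x eps, eps > 0 -> exists delta, delta > 0 /\
    forall y, d x y < delta -> d (T x) (T y) < eps.

(** * Generic topological dynamics on a subspace [sp] of a type [Y], whose
    topology is given by a family of balls [ball y eps]. *)

Definition rel_open {Y : Type} (sp : Y -> Prop) (ball : Y -> R -> Y -> Prop)
  (U : Y -> Prop) : Prop :=
  (forall y, U y -> sp y) /\
  (forall y, U y -> exists eps, eps > 0 /\ forall z, sp z -> ball y eps z -> U z).

Definition rel_closed {Y : Type} (sp : Y -> Prop) (ball : Y -> R -> Y -> Prop)
  (Z : Y -> Prop) : Prop :=
  (forall y, Z y -> sp y) /\
  rel_open sp ball (fun y => sp y /\ ~ Z y).

Definition nonempty {Y : Type} (U : Y -> Prop) : Prop := exists y, U y.

Definition transitive {Y : Type} (sp : Y -> Prop) (ball : Y -> R -> Y -> Prop)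
  (S : Y -> Y) : Prop :=
  forall U V, rel_open sp ball U -> nonempty U -> rel_open sp ball V -> nonempty V ->
    exists n, (n >= 1)%nat /\ exists y, U y /\ V (Nat.iter n S y).

Definition totally_transitive {Y : Type} (sp : Y -> Prop) (ball : Y -> R -> Y -> Prop)
  (S : Y -> Y) : Prop :=
  forall n, (n >= 1)%nat -> transitive sp ball (Nat.iter n S).

Definition periodic_point {Y : Type} (S : Y -> Y) (y : Y) : Prop :=
  exists n, (n >= 1)%nat /\ Nat.iter n S y = y.

Definition dense_periodic {Y : Type} (sp : Y -> Prop) (ball : Y -> R -> Y -> Prop)
  (S : Y -> Y) : Prop :=
  forall U, rel_open sp ball U -> nonempty U -> exists y, U y /\ periodic_point S y.

Definition devaney_chaotic {Y : Type} (sp : Y -> Prop) (ball : Y -> R -> Y -> Prop)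
  (S : Y -> Y) : Prop :=
  transitive sp ball S /\ dense_periodic sp ball S.

Definition dense_small_periodic_sets {Y : Type} (sp : Y -> Prop)
  (ball : Y -> R -> Y -> Prop) (S : Y -> Y) : Prop :=
  forall U, rel_open sp ball U -> nonempty U ->
    exists Z, nonempty Z /\ rel_closed sp ball Z /\ (forall z, Z z -> U z) /\
      exists k, (k >= 1)%nat /\ forall z, Z z -> Z (Nat.iter k S z).

Definition HY_system {Y : Type} (sp : Y -> Prop) (ball : Y -> R -> Y -> Prop)
  (S : Y -> Y) : Prop :=
  totally_transitive sp ball S /\ dense_small_periodic_sets sp ball S.

Definition whole {X : Type} : X -> Prop := fun _ => True.

Definition mball {X : Type} (d : X -> X -> R) (x : X) (eps : R) (y : X) : Prop :=
  d x y < eps.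

Definition KX {X : Type} (d : X -> X -> R) (C : X -> Prop) : Prop :=
  nonempty C /\ rel_closed whole (mball d) C.

(** [hd_le d A B r] : the Hausdorff distance of A and B is at most r, i.e.
    max_{x in A} min_{y in B} d(x,y) <= r and symmetrically (for compact A, B
    the max/min are attained, so this is the literal meaning). *)
Definition hd_le {X : Type} (d : X -> X -> R) (A B : X -> Prop) (r : R) : Prop :=
  (forall x, A x -> exists y, B y /\ d x y <= r) /\
  (forall y, B y -> exists x, A x /\ d x y <= r).

Definition hball {X : Type} (d : X -> X -> R) (A : X -> Prop) (eps : R)
  (B : X -> Prop) : Prop :=
  exists r, 0 <= r /\ r < eps /\ hd_le d A B r.

Definition TK {X : Type} (T : X -> X) (C : X -> Prop) : X -> Prop :=
  fun y => exists x, C x /\ T x = y.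

(* Main.v *)
Require Import Defs.
From Stdlib Require Import Reals List Lia Lra Arith Classical FunctionalExtensionality PropExtensionality IndefiniteDescription.
Open Scope R_scope.

Lemma choice_fun {A B : Type} (P : A -> B -> Prop) :
  (forall a, exists b, P a b) -> exists f : A -> B, forall a, P a (f a).
Proof.
  intro H. exists (fun a => proj1_sig (constructive_indefinite_description _ (H a))).
  intro a. exact (proj2_sig (constructive_indefinite_description _ (H a))).
Qed.

Lemma d_pos {X} (d : X -> X -> R) (Hm : is_metric d) x y : 0 <= d x y.
Proof. destruct Hm as [H _]; auto. Qed.
Lemma d_refl {X} (d : X -> X -> R) (Hm : is_metric d) x : d x x = 0.
Proof. destruct Hm as [_ [H _]]; apply H; auto. Qed.
Lemma d_eq {X} (d : X -> X -> R) (Hm : is_metric d) x y : d x y = 0 -> x = y.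
Proof. destruct Hm as [_ [H _]]; apply H; auto. Qed.
Lemma d_sym {X} (d : X -> X -> R) (Hm : is_metric d) x y : d x y = d y x.
Proof. destruct Hm as [_ [_ [H _]]]; auto. Qed.
Lemma d_tri {X} (d : X -> X -> R) (Hm : is_metric d) x y z : d x z <= d x y + d y z.
Proof. destruct Hm as [_ [_ [_ H]]]; auto. Qed.

Lemma iter_mul {A} (f : A -> A) n m x : Nat.iter n (Nat.iter m f) x = Nat.iter (n*m) f x.
Proof. induction n; simpl; auto. rewrite Nat.iter_add, IHn; auto. Qed.

Lemma iter_comm {A} (f : A -> A) n m x : Nat.iter n f (Nat.iter m f x) = Nat.iter m f (Nat.iter n f x).
Proof. rewrite <- !Nat.iter_add. f_equal. lia. Qed.

Lemma cont_iter {X} (d : X -> X -> R) T (Hc : continuous_map d T) n :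
  continuous_map d (Nat.iter n T).
Proof.
  induction n; intros x eps He.
  - exists eps; split; auto.
  - destruct (Hc (Nat.iter n T x) eps He) as [d1 [Hd1 H1]].
    destruct (IHn x d1 Hd1) as [d2 [Hd2 H2]]. exists d2; split; auto.
    intros y Hy. simpl. apply H1, H2, Hy.
Qed.

Lemma TK_iter {X} (f : X -> X) n E : Nat.iter n (TK f) E = TK (Nat.iter n f) E.
Proof.
  induction n.
  - simpl. apply functional_extensionality; intro y; apply propositional_extensionality;
      unfold TK; split; [intro H; exists y; auto | intros [x [Hx <-]]; auto].
  - simpl. rewrite IHn. apply functional_extensionality; intro y;
      apply propositional_extensionality; unfold TK; split.
    + intros [x [[z [Hz <-]] <-]]. exists z; auto.
    + intros [z [Hz <-]]. exists (Nat.iter n f z); split; eauto.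
Qed.

Lemma TK_ext {X} (f g : X -> X) E : (forall x, f x = g x) -> TK f E = TK g E.
Proof. intro H. replace g with f; auto. apply functional_extensionality; auto. Qed.

Lemma iter_fix {A} (F : A -> A) a n : F a = a -> Nat.iter n F a = a.
Proof. intro H; induction n; simpl; auto. rewrite IHn; auto. Qed.

Lemma phi_ge (phi : nat -> nat) : (forall n, (phi n < phi (S n))%nat) -> forall n, (n <= phi n)%nat.
Proof. intros H n; induction n; [lia|]. specialize (H n); lia. Qed.

Lemma arch_inv eps : eps > 0 -> exists N : nat, forall n, (n >= N)%nat -> / (INR n + 1) < eps.
Proof.
  intro He. destruct (archimed_cor1 eps He) as [N [H1 H2]]. exists N. intros n Hn.
  apply Rle_lt_trans with (/ INR N); auto.
  apply Rinv_le_contravar. apply lt_0_INR; lia.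
  apply le_INR in Hn. lra.
Qed.

Lemma zero_of_small x : 0 <= x -> (forall eps, eps > 0 -> x < eps) -> x = 0.
Proof. intros H1 H2. destruct (Req_dec x 0); auto. specialize (H2 (x/2)). lra. Qed.

Definition closedX {X} (d : X -> X -> R) (C : X -> Prop) : Prop :=
  forall y, ~ C y -> exists eps, eps > 0 /\ forall z, d y z < eps -> ~ C z.

Lemma closedX_iff {X} (d : X -> X -> R) C : rel_closed whole (mball d) C <-> closedX d C.
Proof.
  unfold rel_closed, rel_open, closedX, whole, mball. split.
  - intros [_ [_ H]] y Hy. destruct (H y (conj I Hy)) as [eps [He H']].
    exists eps; split; auto. intros z Hz. apply (H' z I Hz).
  - intros H. split; [auto|]. split; [auto|]. intros y [_ Hy].
    destruct (H y Hy) as [eps [He H']]. exists eps; split; auto.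
Qed.

Definition conv {X} (d : X -> X -> R) (v : nat -> X) l :=
  forall eps, eps > 0 -> exists N, forall n, (n >= N)%nat -> d (v n) l < eps.

Lemma closed_lim {X} (d : X -> X -> R) (Hm : is_metric d) C v l :
  closedX d C -> (exists N, forall n, (n >= N)%nat -> C (v n)) -> conv d v l -> C l.
Proof.
  intros Hc [N HN] Hv. apply NNPP; intro Hl.
  destruct (Hc l Hl) as [eps [He H]]. destruct (Hv eps He) as [N1 H1].
  apply (H (v (max N N1))). rewrite d_sym by auto. apply H1; lia. apply HN; lia.
Qed.

Lemma image_closure {X} (d : X -> X -> R) (Hm : is_metric d) (Hk : compact_metric d)
  C f y : closedX d C -> continuous_map d f ->
  (forall eps, eps > 0 -> exists x, C x /\ d y (f x) < eps) -> exists x, C x /\ f x = y.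
Proof.
  intros Hc Hf H.
  destruct (choice_fun (fun (n : nat) x => C x /\ d y (f x) < / (INR n + 1))) as [xs Hxs].
  { intro n. apply H. apply Rinv_0_lt_compat. pose proof (pos_INR n); lra. }
  destruct (Hk xs) as [phi [l [Hinc Hconv]]].
  assert (Cl : C l).
  { apply (closed_lim d Hm C (fun n => xs (phi n)) l Hc); auto. exists 0%nat. intros; apply Hxs. }
  exists l; split; auto. symmetry. apply (d_eq d Hm).
  apply zero_of_small; [apply (d_pos d Hm)|]. intros eps He.
  destruct (Hf l (eps/2) ltac:(lra)) as [dl [Hdl Hcl]].
  destruct (Hconv dl Hdl) as [N1 H1]. destruct (arch_inv (eps/2) ltac:(lra)) as [N2 H2].
  set (n := max N1 N2).
  pose proof (Hxs (phi n)) as [_ Hx]. pose proof (phi_ge phi Hinc n).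
  assert (Ha : / (INR (phi n) + 1) < eps/2) by (apply H2; lia).
  assert (Hb : d l (xs (phi n)) < dl) by (rewrite d_sym by auto; apply H1; lia).
  specialize (Hcl _ Hb).
  pose proof (d_tri d Hm y (f (xs (phi n))) (f l)) as Ht.
  rewrite (d_sym d Hm (f (xs (phi n)))) in Ht. lra.
Qed.

Lemma image_closed {X} (d : X -> X -> R) (Hm : is_metric d) (Hk : compact_metric d)
  C f : closedX d C -> continuous_map d f -> closedX d (TK f C).
Proof.
  intros Hc Hf y Hy. apply NNPP; intro H. apply Hy.
  destruct (image_closure d Hm Hk C f y Hc Hf) as [x [Hx Hfx]].
  - intros eps He. apply NNPP; intro H2. apply H. exists eps; split; auto.
    intros z Hz [x [Hx <-]]. apply H2. exists x; auto.
  - exists x; auto.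
Qed.

Fixpoint build {X} (g : list X -> X) (n : nat) : list X :=
  match n with O => nil | S n => g (build g n) :: build g n end.

Lemma build_in {X} (g : list X -> X) m n : (m < n)%nat -> In (g (build g m)) (build g n).
Proof.
  induction n; intro H; [lia|]. simpl. destruct (Nat.eq_dec m n) as [->|Hne]; [left; auto|].
  right; apply IHn; lia.
Qed.

Lemma tot_bounded {X} (d : X -> X -> R) (Hm : is_metric d) (Hk : compact_metric d)
  (C : X -> Prop) : (exists c, C c) -> forall eps, eps > 0 ->
  exists l : list X, l <> nil /\ (forall c, In c l -> C c) /\
    (forall x, C x -> exists c, In c l /\ d c x < eps).
Proof.
  intros [c0 Hc0] eps He. apply NNPP; intro H.
  assert (Hcl : forall l : list X, exists x, (forall c, In c l -> C c) ->
     C x /\ forall c, In c l -> eps <= d c x).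
  { intro l. destruct (classic (forall c, In c l -> C c)) as [Hl|Hl]; [|exists c0; tauto].
    destruct l as [|a l'].
    - exists c0; intros _; split; auto. intros c [].
    - apply NNPP; intro H2. apply H. exists (a :: l'); split; [discriminate|]. split; auto.
      intros x Hx. apply NNPP; intro H3. apply H2. exists x. intros _. split; auto.
      intros c Hc. apply Rnot_lt_le. intro H4. apply H3. exists c; auto. }
  destruct (choice_fun _ Hcl) as [g Hg].
  assert (HC : forall n c, In c (build g n) -> C c).
  { induction n; simpl; [tauto|]. intros c [<-|Hc]; auto. apply (Hg _ IHn). }
  set (u := fun n => g (build g n)).
  assert (Hsep : forall m n, (m < n)%nat -> eps <= d (u m) (u n)).
  { intros m n Hmn. unfold u. apply (Hg (build g n) (HC n)). apply build_in; auto. }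
  destruct (Hk u) as [phi [l [Hinc Hconv]]].
  destruct (Hconv (eps/2) ltac:(lra)) as [N HN].
  pose proof (HN N ltac:(lia)). pose proof (HN (S N) ltac:(lia)).
  pose proof (Hsep _ _ (Hinc N)).
  pose proof (d_tri d Hm (u (phi N)) l (u (phi (S N)))).
  rewrite (d_sym d Hm l) in H3. lra.
Qed.

Lemma list_choice {A B : Type} (P : A -> B -> Prop) (l : list A) :
  (forall a, In a l -> exists b, P a b) ->
  exists lb : list B, (forall a, In a l -> exists b, In b lb /\ P a b) /\
    (forall b, In b lb -> exists a, In a l /\ P a b).
Proof.
  induction l as [|a l IH]; intro H.
  - exists nil; split; [intros a []|intros b []].
  - destruct (H a (or_introl eq_refl)) as [b Hb].
    destruct IH as [lb [H1 H2]]. { intros; apply H; right; auto. }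
    exists (b :: lb); split.
    + intros a' [<-|Ha']. exists b; split; [left|]; auto.
      destruct (H1 a' Ha') as [b' [? ?]]. exists b'; split; [right|]; auto.
    + intros b' [<-|Hb']. exists a; split; [left|]; auto.
      destruct (H2 b' Hb') as [a' [? ?]]. exists a'; split; [right|]; auto.
Qed.

Lemma min_rad {A} (l : list A) (f : A -> R) : (forall a, In a l -> f a > 0) ->
  exists s, s > 0 /\ forall a, In a l -> s <= f a.
Proof.
  induction l as [|a l IH]; intro H.
  - exists 1; split; [lra|intros ? []].
  - destruct IH as [s [Hs H']]. { intros; apply H; right; auto. }
    exists (Rmin s (f a)). split. apply Rmin_pos; auto. apply H; left; auto.
    intros b [<-|Hb]. apply Rmin_r. apply Rle_trans with s; [apply Rmin_l|auto].
Qed.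

Lemma fin_closed {X} (d : X -> X -> R) (Hm : is_metric d) (l : list X) :
  closedX d (fun y => In y l).
Proof.
  intros y Hy. destruct (min_rad l (fun c => d y c)) as [s [Hs H]].
  { intros c Hc. destruct (Rle_lt_or_eq_dec 0 (d y c) (d_pos d Hm y c)); [lra|].
    exfalso. apply Hy. rewrite (d_eq d Hm y c); auto. }
  exists s; split; auto. intros z Hz Hzl. specialize (H z Hzl). lra.
Qed.

Lemma sing_closed {X} (d : X -> X -> R) (Hm : is_metric d) (x : X) :
  closedX d (fun y => y = x).
Proof.
  intros y Hy. exists (d y x). split.
  - destruct (Rle_lt_or_eq_dec 0 (d y x) (d_pos d Hm y x)); [lra|].
    exfalso; apply Hy; apply (d_eq d Hm); auto.
  - intros z Hz ->. lra.
Qed.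

Lemma union_closed {X} (d : X -> X -> R) (A B : X -> Prop) :
  closedX d A -> closedX d B -> closedX d (fun x => A x \/ B x).
Proof.
  intros HA HB y Hy. destruct (HA y ltac:(tauto)) as [e1 [He1 H1]].
  destruct (HB y ltac:(tauto)) as [e2 [He2 H2]].
  exists (Rmin e1 e2); split. apply Rmin_pos; auto.
  intros z Hz [Hz'|Hz']. apply (H1 z); auto. pose proof (Rmin_l e1 e2); lra.
  apply (H2 z); auto. pose proof (Rmin_r e1 e2); lra.
Qed.

Lemma periodic_core {X} (d : X -> X -> R) (Hm : is_metric d) (Hk : compact_metric d)
  (S : X -> X) (Hc : continuous_map d S) (Z : X -> Prop) :
  closedX d Z -> (exists z, Z z) -> (forall z, Z z -> Z (S z)) ->
  exists D, (exists x, D x) /\ closedX d D /\ (forall x, D x -> Z x) /\ TK S D = D.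
Proof.
  intros HZ [z0 Hz0] Hinv.
  set (Zn := fun n => TK (Nat.iter n S) Z).
  assert (HZn : forall n, closedX d (Zn n)).
  { intro n. apply image_closed; auto. apply cont_iter; auto. }
  assert (Hiter : forall n z, Z z -> Z (Nat.iter n S z)).
  { intros n z Hz. apply Nat.iter_invariant; auto. }
  assert (Hdec : forall n m x, (n <= m)%nat -> Zn m x -> Zn n x).
  { intros n m x Hnm [z [Hz <-]]. exists (Nat.iter (m - n) S z). split; auto.
    rewrite <- Nat.iter_add. f_equal. lia. }
  set (D := fun x => forall n, Zn n x).
  exists D. split; [|split; [|split]].
  - destruct (Hk (fun n => Nat.iter n S z0)) as [phi [l [Hinc Hconv]]].
    exists l. intro n. apply (closed_lim d Hm (Zn n) (fun k => Nat.iter (phi k) S z0) l (HZn n)); auto.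
    exists n. intros k Hk'. apply (Hdec n (phi k)). pose proof (phi_ge phi Hinc k); lia.
    exists z0; auto.
  - intros y Hy. unfold D in Hy. apply not_all_ex_not in Hy as [n Hn].
    destruct (HZn n y Hn) as [eps [He H]]. exists eps; split; auto.
    intros z Hz Hz'. apply (H z Hz). apply Hz'.
  - intros x Hx. destruct (Hx 0%nat) as [z [Hz <-]]. auto.
  - apply functional_extensionality; intro y; apply propositional_extensionality; split.
    + intros [x [Hx <-]] n. destruct (Hx n) as [z [Hz <-]].
      exists (S z); split; auto. apply Nat.iter_swap.
    + intro Hy.
      assert (Hw : forall n, exists w, Zn n w /\ S w = y).
      { intro n. destruct (Hy (Datatypes.S n)) as [z [Hz Hzy]].
        exists (Nat.iter n S z). split. exists z; auto. rewrite <- Hzy. reflexivity. }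
      destruct (choice_fun _ Hw) as [w Hw'].
      destruct (Hk w) as [phi [l [Hinc Hconv]]].
      assert (Dl : D l).
      { intro n. apply (closed_lim d Hm (Zn n) (fun k => w (phi k)) l (HZn n)); auto.
        exists n. intros k Hk'. apply (Hdec n (phi k)). pose proof (phi_ge phi Hinc k); lia.
        apply Hw'. }
      exists l; split; auto.
      apply (d_eq d Hm). apply zero_of_small; [apply (d_pos d Hm)|]. intros eps He.
      destruct (Hc l eps He) as [dl [Hdl Hcl]]. destruct (Hconv dl Hdl) as [N HN].
      specialize (HN N (le_n _)). rewrite d_sym in HN by auto.
      specialize (Hcl _ HN). destruct (Hw' (phi N)) as [_ Heq]. rewrite Heq in Hcl. auto.
Qed.

Lemma sub_ball {X} (d : X -> X -> R) (Hm : is_metric d) x r z :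
  d x z < r -> exists delta, delta > 0 /\ forall w, d z w < delta -> d x w < r.
Proof.
  intro H. exists (r - d x z). split; [lra|]. intros w Hw.
  pose proof (d_tri d Hm x z w). lra.
Qed.

Lemma cont_ball {X} (d : X -> X -> R) (Hm : is_metric d) f (Hf : continuous_map d f) x y s :
  d y (f x) < s -> exists delta, delta > 0 /\ forall w, d x w < delta -> d y (f w) < s.
Proof.
  intro H. destruct (Hf x (s - d y (f x)) ltac:(lra)) as [dl [Hdl H1]].
  exists dl; split; auto. intros w Hw. specialize (H1 w Hw).
  pose proof (d_tri d Hm y (f x) (f w)). lra.
Qed.

Lemma ball_open_X {X} (d : X -> X -> R) (Hm : is_metric d) x r :
  rel_open whole (mball d) (fun y => d x y < r).
Proof.
  split; [intros; exact I|]. intros y Hy. destruct (sub_ball d Hm x r y Hy) as [dl [H1 H2]].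
  exists dl; split; auto.
Qed.

Lemma open_X_ball {X} (d : X -> X -> R) U y :
  rel_open whole (mball d) U -> U y -> exists r, r > 0 /\ forall z, d y z < r -> U z.
Proof.
  intros [_ H] Hy. destruct (H y Hy) as [r [Hr H']]. exists r; split; auto.
  intros z Hz; apply H'; [exact I|exact Hz].
Qed.

Lemma hd_le_tri {X} (d : X -> X -> R) (Hm : is_metric d) A B C r1 r2 :
  hd_le d A B r1 -> hd_le d B C r2 -> hd_le d A C (r1 + r2).
Proof.
  intros [H1 H2] [H3 H4]. split.
  - intros x Hx. destruct (H1 x Hx) as [y [Hy Hxy]]. destruct (H3 y Hy) as [z [Hz Hyz]].
    exists z; split; auto. pose proof (d_tri d Hm x y z); lra.
  - intros z Hz. destruct (H4 z Hz) as [y [Hy Hyz]]. destruct (H2 y Hy) as [x [Hx Hxy]].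
    exists x; split; auto. pose proof (d_tri d Hm x y z); lra.
Qed.

Lemma hd_le_refl {X} (d : X -> X -> R) (Hm : is_metric d) A : hd_le d A A 0.
Proof. split; intros x Hx; exists x; split; auto; rewrite d_refl by auto; lra. Qed.

Lemma hball_open {X} (d : X -> X -> R) (Hm : is_metric d) A eps B :
  hball d A eps B -> exists e, e > 0 /\ forall F, hball d B e F -> hball d A eps F.
Proof.
  intros [r [Hr0 [Hr H]]]. exists (eps - r). split; [lra|].
  intros F [r' [Hr0' [Hr' H']]]. exists (r + r'). split; [lra|split; [lra|]].
  eapply hd_le_tri; eauto.
Qed.

Definition Kball {X} (d : X -> X -> R) A r := fun E => KX d E /\ hball d A r E.

Lemma Kball_open {X} (d : X -> X -> R) (Hm : is_metric d) A r :
  rel_open (KX d) (hball d) (Kball d A r).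
Proof.
  split. intros y [H _]; auto.
  intros E [HE Hb]. destruct (hball_open d Hm A r E Hb) as [e [He H]].
  exists e; split; auto. intros F HF HbF. split; auto.
Qed.

Lemma Kball_ne {X} (d : X -> X -> R) (Hm : is_metric d) A r :
  KX d A -> r > 0 -> nonempty (Kball d A r).
Proof. intros HA Hr. exists A. split; auto. exists 0. split; [lra|split; [lra|]]. apply hd_le_refl; auto. Qed.

Lemma KX_intro {X} (d : X -> X -> R) C : (exists c, C c) -> closedX d C -> KX d C.
Proof. intros H1 H2. split; auto. apply closedX_iff; auto. Qed.

Lemma KX_closed {X} (d : X -> X -> R) C : KX d C -> closedX d C.
Proof. intros [_ H]. apply closedX_iff; auto. Qed.

Lemma KX_sing {X} (d : X -> X -> R) (Hm : is_metric d) x : KX d (fun y => y = x).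
Proof. apply KX_intro. exists x; auto. apply sing_closed; auto. Qed.

Lemma KX_fin {X} (d : X -> X -> R) (Hm : is_metric d) (l : list X) :
  l <> nil -> KX d (fun y => In y l).
Proof.
  intro H. apply KX_intro. destruct l as [|a l]; [congruence|]. exists a; left; auto.
  apply fin_closed; auto.
Qed.

Lemma KX_image {X} (d : X -> X -> R) (Hm : is_metric d) (Hk : compact_metric d) f C :
  continuous_map d f -> KX d C -> KX d (TK f C).
Proof.
  intros Hf HC. apply KX_intro.
  - destruct HC as [[c Hc] _]. exists (f c), c; auto.
  - apply image_closed; auto. apply KX_closed; auto.
Qed.

Lemma open_K_ball {X} (d : X -> X -> R) (U : (X -> Prop) -> Prop) A :
  rel_open (KX d) (hball d) U -> U A ->
  exists eps, eps > 0 /\ forall F, KX d F -> hball d A eps F -> U F.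
Proof. intros [_ H] HA. apply H; auto. Qed.

Lemma open_K_KX {X} (d : X -> X -> R) (U : (X -> Prop) -> Prop) A :
  rel_open (KX d) (hball d) U -> U A -> KX d A.
Proof. intros [H _] HA. auto. Qed.

Lemma hball_sing {X} (d : X -> X -> R) x r E :
  hball d (fun y => y = x) r E -> forall e, E e -> d x e < r.
Proof.
  intros [rho [_ [Hr [_ H2]]]] e He. destruct (H2 e He) as [x' [-> H]]. lra.
Qed.

Definition Pprop {X} (d : X -> X -> R) (T : X -> X) : Prop :=
  forall x r, r > 0 -> forall l : list (X * R), (forall t, In t l -> snd t > 0) ->
  exists n, (n >= 1)%nat /\ forall t, In t l -> exists u, d x u < r /\ d (fst t) (Nat.iter n T u) < snd t.

Lemma P_of_Ktrans {X} (d : X -> X -> R) (Hm : is_metric d) T :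
  transitive (KX d) (hball d) (TK T) -> Pprop d T.
Proof.
  intros Htr x r Hr l Hl. destruct l as [|t0 l0] eqn:El.
  { exists 1%nat; split; [lia|intros t []]. }
  rewrite <- El in *.
  destruct (min_rad l snd Hl) as [s [Hs Hsl]].
  assert (Hne : map fst l <> nil) by (rewrite El; discriminate).
  destruct (Htr (Kball d (fun y => y = x) r) (Kball d (fun y => In y (map fst l)) s))
    as [n [Hn [E [[HE HbE] [_ HbV]]]]].
  - apply Kball_open; auto.
  - apply Kball_ne; auto. apply KX_sing; auto.
  - apply Kball_open; auto.
  - apply Kball_ne; auto. apply KX_fin; auto.
  - exists n; split; auto. intros t Ht. rewrite TK_iter in HbV.
    destruct HbV as [rho [_ [Hrho [H1 _]]]].
    destruct (H1 (fst t) (in_map fst l t Ht)) as [y [[e [He <-]] Hy]].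
    exists e; split. apply (hball_sing d x r E HbE e He).
    specialize (Hsl t Ht). lra.
Qed.

Lemma TTb {X} (d : X -> X -> R) (Hm : is_metric d) T :
  totally_transitive whole (mball d) T -> forall m, (m >= 1)%nat -> forall x r y s, r > 0 -> s > 0 ->
  exists n, (n >= 1)%nat /\ exists u, d x u < r /\ d y (Nat.iter (n*m) T u) < s.
Proof.
  intros H m Hm1 x r y s Hr Hs.
  destruct (H m Hm1 (fun z => d x z < r) (fun z => d y z < s)) as [n [Hn [u [Hu Hv]]]].
  - apply ball_open_X; auto.
  - exists x. rewrite d_refl; auto.
  - apply ball_open_X; auto.
  - exists y. rewrite d_refl; auto.
  - exists n; split; auto. exists u; split; auto. rewrite <- iter_mul; auto.
Qed.

Lemma DSPb {X} (d : X -> X -> R) (Hm : is_metric d) T :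
  dense_small_periodic_sets whole (mball d) T -> forall x r, r > 0 ->
  exists z k, (k >= 1)%nat /\ forall i, d x (Nat.iter (i*k) T z) < r.
Proof.
  intros H x r Hr.
  destruct (H (fun z => d x z < r)) as [Z [[z Hz] [_ [HZU [k [Hk HZk]]]]]].
  - apply ball_open_X; auto.
  - exists x. rewrite d_refl; auto.
  - exists z, k; split; auto. intro i. apply HZU.
    induction i. simpl; auto. simpl. rewrite Nat.iter_add. apply HZk; auto.
Qed.

Lemma P_of_HY {X} (d : X -> X -> R) (Hm : is_metric d) T (Hc : continuous_map d T) :
  HY_system whole (mball d) T -> Pprop d T.
Proof.
  intros [HTT HDSP].
  assert (Q : forall l, forall x r (p : X * R), r > 0 -> snd p > 0 -> (forall t, In t l -> snd t > 0) ->
    exists n, (n >= 1)%nat /\ forall t, In t (p :: l) ->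
      exists u, d x u < r /\ d (fst t) (Nat.iter n T u) < snd t).
  { induction l as [|q l IH]; intros x r p Hr Hp Hl.
    - destruct (TTb d Hm T HTT 1 (le_n _) x r (fst p) (snd p) Hr Hp) as [n [Hn [u [H1 H2]]]].
      exists n; split; auto. intros t [<-|[]]. exists u; split; auto. rewrite Nat.mul_1_r in H2; auto.
    - assert (Hq : snd q > 0) by (apply Hl; left; auto).
      destruct (DSPb d Hm T HDSP x r Hr) as [z [k [Hk Hz]]].
      destruct (TTb d Hm T HTT k Hk (fst p) (snd p) (fst q) (snd q) Hp Hq) as [n' [Hn' [u [Hu1 Hu2]]]].
      set (a := (n' * k)%nat) in *.
      destruct (sub_ball d Hm _ _ _ Hu1) as [da [Hda Ha]].
      destruct (cont_ball d Hm _ (cont_iter d T Hc a) _ _ _ Hu2) as [db [Hdb Hb]].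
      assert (Hz0 : d x z < r) by (apply (Hz 0%nat)).
      destruct (sub_ball d Hm _ _ _ Hz0) as [dc [Hdc Hc']].
      destruct (cont_ball d Hm _ (cont_iter d T Hc a) _ _ _ (Hz n')) as [dd [Hdd Hd']].
      destruct (IH z (Rmin dc dd) (u, Rmin da db)) as [n [Hn H]].
      + apply Rmin_pos; auto.
      + apply Rmin_pos; auto.
      + intros; apply Hl; right; auto.
      + exists n; split; auto.
        destruct (H (u, Rmin da db) (or_introl eq_refl)) as [w [Hw1 Hw2]]. simpl in Hw2.
        pose proof (Rmin_l dc dd). pose proof (Rmin_r dc dd).
        pose proof (Rmin_l da db). pose proof (Rmin_r da db).
        intros t [<-|[<-|Ht]].
        * exists w; split. apply Hc'; lra. apply Ha; lra.
        * exists (Nat.iter a T w); split. apply Hd'; lra. rewrite iter_comm. apply Hb; lra.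
        * destruct (H t (or_intror Ht)) as [w' [Hw1' Hw2']]. exists w'; split; auto.
          apply Hc'; lra. }
  intros x r Hr l Hl. destruct l as [|p l].
  - exists 1%nat; split; [lia|intros t []].
  - apply Q; auto. apply Hl; left; auto. intros; apply Hl; right; auto.
Qed.

Lemma surj_of_P {X} (d : X -> X -> R) (Hm : is_metric d) (Hk : compact_metric d) T
  (Hc : continuous_map d T) : Pprop d T -> forall k y, exists x, Nat.iter k T x = y.
Proof.
  intros HP.
  assert (H1 : forall y, exists x, T x = y).
  { intro y. destruct (image_closure d Hm Hk (fun _ => True) T y) as [x [_ Hx]]; auto.
    - intros z Hz; exfalso; auto.
    - intros eps He. destruct (HP y 1 ltac:(lra) ((y, eps) :: nil)) as [n [Hn H]].
      { intros t [<-|[]]; simpl; auto. }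
      destruct (H (y, eps) (or_introl eq_refl)) as [u [_ Hu]]. simpl in Hu.
      exists (Nat.iter (n - 1) T u). split; auto.
      replace n with (S (n - 1)) in Hu by lia. exact Hu.
    - exists x; auto. }
  induction k; intro y. exists y; auto.
  destruct (H1 y) as [x1 <-]. destruct (IHk x1) as [x2 <-]. exists x2. reflexivity.
Qed.

Lemma targets_for {X} (d : X -> X -> R) (Hm : is_metric d) (Hk : compact_metric d) T
  (Hc : continuous_map d T) (HP : Pprop d T) p k0 y s : s > 0 ->
  exists ts : list (X * R), (forall t, In t ts -> snd t > 0) /\
    forall j, (j < p)%nat -> exists t, In t ts /\
      forall w, d (fst t) w < snd t -> d y (Nat.iter (k0 + j) T w) < s.
Proof.
  intro Hs. induction p.
  - exists nil; split; [intros t []|intros j Hj; lia].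
  - destruct IHp as [ts [H1 H2]].
    destruct (surj_of_P d Hm Hk T Hc HP (k0 + p) y) as [v Hv].
    destruct (cont_ball d Hm _ (cont_iter d T Hc (k0 + p)) v y s) as [dl [Hdl Hb]].
    { rewrite Hv, d_refl; auto. }
    exists ((v, dl) :: ts). split.
    + intros t [<-|Ht]; auto.
    + intros j Hj. destruct (Nat.eq_dec j p) as [->|Hne].
      * exists (v, dl); split; [left; auto|]. exact Hb.
      * destruct (H2 j ltac:(lia)) as [t [Ht Ht']]. exists t; split; [right|]; auto.
Qed.

Lemma chain {X} (d : X -> X -> R) (Hm : is_metric d) (Hk : compact_metric d) T
  (Hc : continuous_map d T) (HP : Pprop d T) p e (He : e > 0) (l : list (X * X)) :
  forall x0 r0, r0 > 0 -> exists z delta (ts : list (X * R)), delta > 0 /\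
    (forall w, d z w < delta -> d x0 w < r0) /\
    (forall t, In t ts -> snd t > 0) /\
    forall n, (forall t, In t ts -> exists w, d z w < delta /\ d (fst t) (Nat.iter n T w) < snd t) ->
      forall j, (j < p)%nat -> forall q, In q l ->
        exists u, d (fst q) u < e /\ d (snd q) (Nat.iter (n + j) T u) < e.
Proof.
  induction l as [|q l IH]; intros x0 r0 Hr0.
  - exists x0, r0, nil. split; auto. split; auto. split; [intros t []|]. intros; contradiction.
  - destruct (HP x0 r0 Hr0 ((fst q, e) :: nil)) as [n0 [_ H0]].
    { intros t [<-|[]]; auto. }
    destruct (H0 _ (or_introl eq_refl)) as [u [Hu1 Hu2]]. simpl in Hu2.
    destruct (sub_ball d Hm _ _ _ Hu1) as [da [Hda Ha]].
    destruct (cont_ball d Hm _ (cont_iter d T Hc n0) _ _ _ Hu2) as [db [Hdb Hb]].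
    destruct (targets_for d Hm Hk T Hc HP p n0 (snd q) e He) as [tsq [Htsq1 Htsq2]].
    destruct (IH u (Rmin da db) (Rmin_pos _ _ Hda Hdb)) as [z [dl [ts [Hdl [Hsub [Hts Hconc]]]]]].
    pose proof (Rmin_l da db). pose proof (Rmin_r da db).
    exists z, dl, (tsq ++ ts). split; auto. split.
    { intros w Hw. apply Ha. specialize (Hsub w Hw). lra. }
    split. { intros t Ht. apply in_app_or in Ht as [Ht|Ht]; auto. }
    intros n Hhit j Hj q' Hq'. destruct Hq' as [<-|Hq'].
    + destruct (Htsq2 j Hj) as [t [Ht Ht']].
      destruct (Hhit t (in_or_app _ _ _ (or_introl Ht))) as [w [Hw1 Hw2]].
      exists (Nat.iter n0 T w). split.
      * apply Hb. specialize (Hsub w Hw1). lra.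
      * specialize (Ht' _ Hw2). rewrite <- Nat.iter_add in *.
        replace (n + j + n0)%nat with (n0 + j + n)%nat by lia. exact Ht'.
    + apply (Hconc n); auto. intros t Ht. apply Hhit. apply in_or_app; auto.
Qed.

Lemma mod_split n p : (p >= 1)%nat -> exists j c, (j < p)%nat /\ (n + j = c * p)%nat.
Proof.
  intro Hp. induction n.
  - exists 0%nat, 0%nat; split; lia.
  - destruct IHn as [j [c [Hj Hjc]]]. destruct j.
    + exists (p - 1)%nat, (S c); split; [lia|]. simpl. lia.
    + exists j, c; split; lia.
Qed.

Definition Mprop {X} (d : X -> X -> R) (T : X -> X) : Prop :=
  forall p, (p >= 1)%nat -> forall e, e > 0 -> forall l : list (X * X),
  exists c, (c >= 1)%nat /\ forall q, In q l ->
    exists u, d (fst q) u < e /\ d (snd q) (Nat.iter (c * p) T u) < e.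

Lemma M_of_P {X} (d : X -> X -> R) (Hm : is_metric d) (Hk : compact_metric d) T
  (Hc : continuous_map d T) : Pprop d T -> Mprop d T.
Proof.
  intros HP p Hp e He l. destruct l as [|q0 l0] eqn:El.
  { exists 1%nat; split; [lia|intros q []]. }
  rewrite <- El.
  destruct (chain d Hm Hk T Hc HP p e He l (fst q0) 1 ltac:(lra)) as [z [dl [ts [Hdl [_ [Hts Hconc]]]]]].
  destruct (HP z dl Hdl ts Hts) as [n [Hn Hhit]].
  destruct (mod_split n p Hp) as [j [c [Hj Hjc]]].
  exists c; split.
  - destruct c; simpl in Hjc; lia.
  - intros q Hq. rewrite <- Hjc. apply (Hconc n); auto.
Qed.

Lemma Ktt_of_M {X} (d : X -> X -> R) (Hm : is_metric d) (Hk : compact_metric d) T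
  (Hc : continuous_map d T) : Mprop d T -> totally_transitive (KX d) (hball d) (TK T).
Proof.
  intros HM m Hm1 U V HU [A HA] HV [B HB].
  destruct (open_K_ball d U A HU HA) as [eps1 [He1 HU1]].
  destruct (open_K_ball d V B HV HB) as [eps2 [He2 HV1]].
  pose proof (open_K_KX d U A HU HA) as KA. pose proof (open_K_KX d V B HV HB) as KB.
  set (e := Rmin eps1 eps2 / 3).
  assert (He : e > 0) by (unfold e; pose proof (Rmin_pos _ _ He1 He2); lra).
  assert (He1' : 2 * e < eps1) by (unfold e; pose proof (Rmin_l eps1 eps2); pose proof (Rmin_pos _ _ He1 He2); lra).
  assert (He2' : 2 * e < eps2) by (unfold e; pose proof (Rmin_r eps1 eps2); pose proof (Rmin_pos _ _ He1 He2); lra).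
  destruct (tot_bounded d Hm Hk A (proj1 KA) e He) as [la [Hla1 [Hla2 Hla3]]].
  destruct (tot_bounded d Hm Hk B (proj1 KB) e He) as [lb [Hlb1 [Hlb2 Hlb3]]].
  destruct (HM m Hm1 e He (list_prod la lb)) as [c [Hc1 Hq]].
  destruct (list_choice (fun q u => d (fst q) u < e /\ d (snd q) (Nat.iter (c * m) T u) < e)
     (list_prod la lb) Hq) as [lu [H1 H2]].
  destruct la as [|a0 la']; [congruence|]. destruct lb as [|b0 lb']; [congruence|].
  set (la := a0 :: la') in *. set (lb := b0 :: lb') in *.
  assert (Ha0 : In a0 la) by (left; auto). assert (Hb0 : In b0 lb) by (left; auto).
  assert (Hlu : lu <> nil).
  { destruct (H1 (a0, b0) (in_prod _ _ _ _ Ha0 Hb0)) as [u [Hu _]]. destruct lu; [contradiction|discriminate]. }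
  exists c; split; auto. exists (fun y => In y lu). split.
  - apply HU1. apply KX_fin; auto. exists (2 * e). split; [lra|split; [lra|split]].
    + intros x Hx. destruct (Hla3 x Hx) as [a [Ha Hax]].
      destruct (H1 (a, b0) (in_prod _ _ _ _ Ha Hb0)) as [u [Hu [Hu1 _]]].
      exists u; split; auto. simpl in Hu1. pose proof (d_tri d Hm x a u).
      rewrite (d_sym d Hm x a) in H. lra.
    + intros u Hu. destruct (H2 u Hu) as [[a b] [Hab [Hu1 _]]].
      apply in_prod_iff in Hab as [Ha _]. exists a; split; auto. simpl in Hu1; lra.
  - rewrite iter_mul, TK_iter. apply HV1.
    + apply KX_image; auto. apply cont_iter; auto. apply KX_fin; auto.
    + exists (2 * e). split; [lra|split; [lra|split]].
      * intros x Hx. destruct (Hlb3 x Hx) as [b [Hb Hbx]].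
        destruct (H1 (a0, b) (in_prod _ _ _ _ Ha0 Hb)) as [u [Hu [_ Hu2]]].
        exists (Nat.iter (c * m) T u); split. exists u; auto.
        simpl in Hu2. pose proof (d_tri d Hm x b (Nat.iter (c * m) T u)).
        rewrite (d_sym d Hm x b) in H. lra.
      * intros y [u [Hu <-]]. destruct (H2 u Hu) as [[a b] [Hab [_ Hu2]]].
        apply in_prod_iff in Hab as [_ Hb]. exists b; split; auto. simpl in Hu2; lra.
Qed.

Lemma trans_of_tt {Y} (sp : Y -> Prop) ball S : totally_transitive sp ball S -> transitive sp ball S.
Proof.
  intro H. specialize (H 1%nat (le_n _)).
  replace (Nat.iter 1 S) with S in H by (apply functional_extensionality; reflexivity). exact H.
Qed.

Lemma HYX_of_HYK {X} (d : X -> X -> R) (Hm : is_metric d) (Hk : compact_metric d) T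
  (Hc : continuous_map d T) : HY_system (KX d) (hball d) (TK T) -> HY_system whole (mball d) T.
Proof.
  intros [Htt Hdsp]. split.
  - intros m Hm1 U V HU [x Hx] HV [y Hy].
    destruct (open_X_ball d U x HU Hx) as [r [Hr HUr]].
    destruct (open_X_ball d V y HV Hy) as [s [Hs HVs]].
    destruct (Htt m Hm1 (Kball d (fun z => z = x) r) (Kball d (fun z => z = y) s)) as [n [Hn [E [[HE HbE] [_ HbV]]]]].
    + apply Kball_open; auto.
    + apply Kball_ne; auto. apply KX_sing; auto.
    + apply Kball_open; auto.
    + apply Kball_ne; auto. apply KX_sing; auto.
    + rewrite iter_mul, TK_iter in HbV. destruct HbV as [rho [_ [Hrho [H1 _]]]].
      destruct (H1 y eq_refl) as [w [[e [He <-]] Hw]].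
      exists n; split; auto. exists e; split.
      apply HUr. apply (hball_sing d x r E HbE e He).
      rewrite iter_mul. apply HVs. lra.
  - intros U HU [x Hx]. destruct (open_X_ball d U x HU Hx) as [r [Hr HUr]].
    destruct (Hdsp (Kball d (fun z => z = x) (r/2))) as [Z [[C HC] [_ [HZU [k [Hk1 HZk]]]]]].
    + apply Kball_open; auto.
    + apply Kball_ne; auto. apply KX_sing; auto. lra.
    + assert (Zinv : forall j, Z (TK (Nat.iter (j * k) T) C)).
      { intro j. rewrite <- TK_iter, <- (iter_mul (TK T)).
        apply Nat.iter_invariant; auto. }
      destruct (HZU C HC) as [[[c0 Hc0] _] _].
      set (W := fun y => forall eps, eps > 0 -> exists j c, C c /\ d y (Nat.iter (j * k) T c) < eps).
      exists W. split; [|split; [|split]].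
      * exists c0. intros eps He. exists 0%nat, c0. split; auto. simpl. rewrite d_refl; auto.
      * apply closedX_iff. intros y Hy. unfold W in Hy.
        apply not_all_ex_not in Hy as [eps Heps].
        apply imply_to_and in Heps as [He Hn].
        exists (eps / 2). split; [lra|]. intros z Hz HWz.
        destruct (HWz (eps/2) ltac:(lra)) as [j [c [Hcc Hd]]]. apply Hn. exists j, c. split; auto.
        pose proof (d_tri d Hm y z (Nat.iter (j * k) T c)). lra.
      * intros y Hy. apply HUr. destruct (Hy (r/2) ltac:(lra)) as [j [c [Hcc Hd]]].
        destruct (HZU _ (Zinv j)) as [_ Hb].
        pose proof (hball_sing d x (r/2) _ Hb (Nat.iter (j * k) T c) (ex_intro _ c (conj Hcc eq_refl))).
        pose proof (d_tri d Hm x (Nat.iter (j * k) T c) y).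
        rewrite (d_sym d Hm (Nat.iter (j * k) T c) y) in H0. lra.
      * exists k; split; auto. intros y Hy eps He.
        destruct (cont_iter d T Hc k y eps He) as [dl [Hdl Hcont]].
        destruct (Hy dl Hdl) as [j [c [Hcc Hd]]]. exists (S j), c. split; auto.
        specialize (Hcont _ Hd). simpl. rewrite Nat.iter_add. exact Hcont.
Qed.

Lemma periodic_cover {X} (d : X -> X -> R) (Hm : is_metric d) (Hk : compact_metric d) T
  (Hc : continuous_map d T) : dense_small_periodic_sets whole (mball d) T ->
  forall e, e > 0 -> forall l : list X, exists D k, (k >= 1)%nat /\ closedX d D /\
    (forall c, In c l -> exists p, D p /\ d c p < e) /\
    (forall p, D p -> exists c, In c l /\ d c p < e) /\ TK (Nat.iter k T) D = D.
Proof.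
  intros Hdsp e He l. induction l as [|c l IH].
  - exists (fun _ => False), 1%nat. split; [lia|split; [|split; [|split]]].
    + intros y _. exists 1; split; [lra|]. auto.
    + intros c [].
    + intros p [].
    + apply functional_extensionality; intro y; apply propositional_extensionality.
      split; [intros [x [[] _]]|intros []].
  - destruct IH as [D' [k' [Hk' [HD'c [HD'1 [HD'2 HD'inv]]]]]].
    destruct (Hdsp (fun y => d c y < e)) as [Z [HZne [HZcl [HZU [k0 [Hk0 HZk0]]]]]].
    { apply ball_open_X; auto. }
    { exists c. rewrite d_refl; auto. }
    apply closedX_iff in HZcl.
    set (S := Nat.iter (k' * k0) T).
    destruct (periodic_core d Hm Hk S (cont_iter d T Hc _) Z HZcl HZne) as [Dc [HDcne [HDcc [HDcZ HDcinv]]]].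
    { intros z Hz. unfold S. rewrite <- iter_mul. apply Nat.iter_invariant; auto. }
    assert (HD'S : TK S D' = D').
    { unfold S. rewrite Nat.mul_comm.
      rewrite (TK_ext _ (Nat.iter k0 (Nat.iter k' T))) by (intro; rewrite iter_mul; auto).
      rewrite <- TK_iter. apply iter_fix; auto. }
    exists (fun x => Dc x \/ D' x), (k' * k0)%nat. split; [nia|split; [|split; [|split]]].
    + apply union_closed; auto.
    + intros c' [<-|Hc'].
      * destruct HDcne as [p Hp]. exists p; split; auto.
      * destruct (HD'1 c' Hc') as [p [Hp Hp']]. exists p; split; auto.
    + intros p [Hp|Hp].
      * exists c; split; [left; auto|]. apply HZU; auto.
      * destruct (HD'2 p Hp) as [c' [Hc' Hd]]. exists c'; split; [right|]; auto.
    + fold S. apply functional_extensionality; intro y; apply propositional_extensionality. split.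
      * intros [x [[Hx|Hx] <-]].
        -- left. rewrite <- HDcinv. exists x; auto.
        -- right. rewrite <- HD'S. exists x; auto.
      * intros [Hy|Hy].
        -- rewrite <- HDcinv in Hy. destruct Hy as [x [Hx <-]]. exists x; auto.
        -- rewrite <- HD'S in Hy. destruct Hy as [x [Hx <-]]. exists x; auto.
Qed.

Lemma DPK_of_DSPX {X} (d : X -> X -> R) (Hm : is_metric d) (Hk : compact_metric d) T
  (Hc : continuous_map d T) : dense_small_periodic_sets whole (mball d) T ->
  dense_periodic (KX d) (hball d) (TK T).
Proof.
  intros Hdsp U HU [A HA].
  destruct (open_K_ball d U A HU HA) as [eps [He HU1]].
  pose proof (open_K_KX d U A HU HA) as KA.
  set (e := eps / 3). assert (He' : e > 0) by (unfold e; lra).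
  destruct (tot_bounded d Hm Hk A (proj1 KA) e He') as [l [Hl1 [Hl2 Hl3]]].
  destruct (periodic_cover d Hm Hk T Hc Hdsp e He' l) as [D [k [Hk1 [HDc [HD1 [HD2 HDinv]]]]]].
  exists D. split.
  - apply HU1.
    + apply KX_intro; auto. destruct l as [|c l']; [congruence|].
      destruct (HD1 c (or_introl eq_refl)) as [p [Hp _]]. exists p; auto.
    + exists (2 * e). split; [lra|split; [unfold e; lra|split]].
      * intros x Hx. destruct (Hl3 x Hx) as [c [Hc' Hcx]].
        destruct (HD1 c Hc') as [p [Hp Hcp]]. exists p; split; auto.
        pose proof (d_tri d Hm x c p). rewrite (d_sym d Hm x c) in H. lra.
      * intros p Hp. destruct (HD2 p Hp) as [c [Hc' Hcp]]. exists c; split; auto. lra.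
  - exists k; split; auto. rewrite TK_iter. auto.
Qed.

Lemma DSPK_of_DPK {X} (d : X -> X -> R) (Hm : is_metric d) T :
  dense_periodic (KX d) (hball d) (TK T) -> dense_small_periodic_sets (KX d) (hball d) (TK T).
Proof.
  intros Hdp U HU HUne. destruct (Hdp U HU HUne) as [D [HD [n [Hn Hper]]]].
  pose proof (open_K_KX d U D HU HD) as KD.
  exists (fun E => E = D). split; [exists D; auto|split; [|split]].
  - split. intros y ->; auto. split. intros y [H _]; auto.
    intros E [KE HED].
    assert (Hx : exists x, ~ (E x <-> D x)).
    { apply NNPP; intro H. apply HED. apply functional_extensionality; intro x;
      apply propositional_extensionality. apply NNPP; intro H2. apply H; exists x; auto. }
    destruct Hx as [x Hx].
    destruct (classic (E x)) as [Ex|Ex].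
    + assert (nDx : ~ D x) by tauto.
      destruct (KX_closed d D KD x nDx) as [r [Hr Hr']].
      exists r; split; auto. intros F KF HbF. split; auto. intros ->.
      destruct HbF as [rho [_ [Hrho [H1 _]]]]. destruct (H1 x Ex) as [y [Dy Hy]].
      apply (Hr' y); auto. lra.
    + assert (Dx : D x) by tauto.
      destruct (KX_closed d E KE x Ex) as [r [Hr Hr']].
      exists r; split; auto. intros F KF HbF. split; auto. intros ->.
      destruct HbF as [rho [_ [Hrho [_ H2]]]]. destruct (H2 x Dx) as [y [Ey Hy]].
      apply (Hr' y); auto. rewrite d_sym by auto. lra.
  - intros z ->; auto.
  - exists n; split; auto. intros z ->. rewrite Hper; auto.
Qed.

Theorem theorem1 (X : Type) (d : X -> X -> R) (T : X -> X)
  (Hmetric : is_metric d) (Hcompact : compact_metric d)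
  (Hinf : infinite_type X) (Hcont : continuous_map d T) :
  (devaney_chaotic (KX d) (hball d) (TK T) <-> HY_system (KX d) (hball d) (TK T)) /\
  (HY_system (KX d) (hball d) (TK T) <-> HY_system whole (mball d) T).
Proof.
  assert (H3to : HY_system whole (mball d) T ->
            totally_transitive (KX d) (hball d) (TK T) /\ dense_periodic (KX d) (hball d) (TK T)).
  { intro H3. split.
    - apply Ktt_of_M; auto. apply M_of_P; auto. apply P_of_HY; auto.
    - apply DPK_of_DSPX; auto. apply H3. }
  split; split.
  - intros [Htr Hdp]. split.
    + apply Ktt_of_M; auto. apply M_of_P; auto. apply P_of_Ktrans; auto.
    + apply DSPK_of_DPK; auto.
  - intro HK. destruct (H3to (HYX_of_HYK d Hmetric Hcompact T Hcont HK)) as [Htt Hdp].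
    split; auto. apply trans_of_tt; auto.
  - apply HYX_of_HYK; auto.
  - intro H3. destruct (H3to H3) as [Htt Hdp]. split; auto. apply DSPK_of_DPK; auto.
Qed.
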